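(* Let $a_0,a_1,a_2,a_3\in\mathbb{R}$ and consider the monic binary quartic form $$f(x,y)=x^4+a_3x^3y+a_2x^2y^2+a_1xy^3+a_0y^4 .$$ Let $$b_0=\tfrac14\,(-a_1^2+a_1a_2a_3-a_0a_3^2),\quad b_1=\tfrac14\,(4a_0-a_2^2-a_1a_3),\quad b_2=\tfrac{a_2}{2},\quad \lambda_0=\frac{4b_2+2\sqrt{3b_1+4b_2^2}}{3}.$$ Then $f$ is positive semi-definite if and only if $\lambda_0$ is real and $$\lambda_0\ge \frac{a_3^2}{4},\qquad -\tfrac14\lambda_0^3+b_2\lambda_0^2+b_1\lambda_0+b_0\ge 0 .$$ Moreover, $f$ is positive definite if and only if $\lambda_0$ is real and $$\lambda_0> \frac{a_3^2}{4},\qquad -\tfrac14\lambda_0^3+b_2\lambda_0^2+b_1\lambda_0+b_0> 0 .$$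
   Context: A binary form $f(x,y)$ with real coefficients is positive definite (resp. positive semi-definite) if $f(x,y)>0$ (resp. $f(x,y)\ge 0$) for all real $x,y$ not both zero. The quantity $\lambda_0$ is real exactly when $3b_1+4b_2^2\ge 0$. *)

(* Defs.v *)
From Stdlib Require Import Reals.
Open Scope R_scope.

Definition quartic (a0 a1 a2 a3 x y : R) : R :=
  x^4 + a3 * x^3 * y + a2 * x^2 * y^2 + a1 * x * y^3 + a0 * y^4.

Definition psd_form (f : R -> R -> R) : Prop :=
  forall x y : R, ~ (x = 0 /\ y = 0) -> 0 <= f x y.

Definition pd_form (f : R -> R -> R) : Prop :=
  forall x y : R, ~ (x = 0 /\ y = 0) -> 0 < f x y.

Definition b0 (a0 a1 a2 a3 : R) : R := / 4 * (- a1^2 + a1 * a2 * a3 - a0 * a3^2).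
Definition b1 (a0 a1 a2 a3 : R) : R := / 4 * (4 * a0 - a2^2 - a1 * a3).
Definition b2 (a2 : R) : R := a2 / 2.

(* discriminant-like quantity under the square root; lambda0 is real iff it is >= 0 *)
Definition lam_rad (a0 a1 a2 a3 : R) : R := 3 * b1 a0 a1 a2 a3 + 4 * (b2 a2)^2.

(* lambda0, meaningful when lam_rad >= 0 (sqrt is the real square root) *)
Definition lambda0 (a0 a1 a2 a3 : R) : R :=
  (4 * b2 a2 + 2 * sqrt (lam_rad a0 a1 a2 a3)) / 3.

Definition cubic_val (a0 a1 a2 a3 l : R) : R :=
  - / 4 * l^3 + b2 a2 * l^2 + b1 a0 a1 a2 a3 * l + b0 a0 a1 a2 a3.

(* Main.v *)
Require Import Defs.
From Stdlib Require Import Reals Lra Psatz.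
From Coquelicot Require Import Coquelicot.
Open Scope R_scope.
Lemma nec_alg x0 p W m a0 a1 a2 a3 : 0 <= W -> 0 <= m ->
  a3 = 2*p - 2*x0 -> a2 = x0^2 - 4*x0*p + p^2 + W ->
  a1 = 2*x0^2*p - 2*x0*p^2 - 2*x0*W -> a0 = x0^2*p^2 + x0^2*W + m ->
  0 <= lam_rad a0 a1 a2 a3 /\ a3^2/4 + W <= lambda0 a0 a1 a2 a3 /\
  W*m <= cubic_val a0 a1 a2 a3 (lambda0 a0 a1 a2 a3) /\
  (0 < m -> a3^2/4 < lambda0 a0 a1 a2 a3 /\ 0 < cubic_val a0 a1 a2 a3 (lambda0 a0 a1 a2 a3)).
Proof.
  intros HW Hm e3 e2 e1 e0.
  set (T := (x0+p)^2 + W).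
  assert (HT : 0 <= T). { unfold T. pose proof (pow2_ge_0 (x0+p)). lra. }
  assert (Hrad : lam_rad a0 a1 a2 a3 = T^2/4 + 3*m).
  { unfold lam_rad, b1, b2, T; subst; field. }
  assert (Hl : lambda0 a0 a1 a2 a3 = (2*a2 + 2*sqrt (T^2/4+3*m))/3).
  { unfold lambda0; rewrite Hrad; unfold b2; field. }
  rewrite Hl, Hrad.
  assert (Hpos : 0 <= T^2/4+3*m) by nra.
  pose proof (sqrt_sqrt _ Hpos) as Hr2.
  pose proof (sqrt_pos (T^2/4+3*m)) as Hr0.
  set (r := sqrt (T^2/4+3*m)) in *. clearbody r.
  assert (HrT : T/2 <= r) by nra.
  assert (Hm' : m = (r*r - T^2/4)/3) by lra.
  assert (Hcub : 4 * cubic_val a0 a1 a2 a3 ((2*a2 + 2*r)/3) =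
     4*W*m + ((2*r - T)/3)^2 * (2*r - (2*r-T)/3)).
  { unfold cubic_val, b0, b1, b2. subst a0 a1 a2 a3. rewrite Hm'. unfold T. field. }
  assert (Hlam : (2*a2 + 2*r)/3 = a3^2/4 + W + 2/3*(r - T/2)).
  { subst a2 a3. unfold T. field. }
  rewrite Hlam in Hcub |- *.
  split; [lra|]. split; [lra|]. split.
  - assert (0 <= ((2*r - T)/3)^2 * (2*r - (2*r-T)/3)) by (apply Rmult_le_pos; nra).
    lra.
  - intro Hmp. assert (HrT' : T/2 < r) by nra. split; [lra|].
    assert (0 < ((2*r - T)/3)^2 * (2*r - (2*r-T)/3)) by (apply Rmult_lt_0_compat; nra).
    nra.
Qed.
Lemma decomp a0 a1 a2 a3 l x y :
  quartic a0 a1 a2 a3 x y =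
  (x^2 + a3/2*x*y + (a2-l)/2*y^2)^2 +
  y^2*((l - a3^2/4)*x^2 + (a1 - a3*(a2-l)/2)*x*y + (a0 - (a2-l)^2/4)*y^2).
Proof. unfold quartic; field. Qed.

Lemma cub_id a0 a1 a2 a3 l :
  4 * cubic_val a0 a1 a2 a3 l =
  4*(l - a3^2/4)*(a0 - (a2-l)^2/4) - (a1 - a3*(a2-l)/2)^2.
Proof. unfold cubic_val, b0, b1, b2; field. Qed.

Lemma crit a0 a1 a2 a3 l : 0 <= lam_rad a0 a1 a2 a3 -> l = lambda0 a0 a1 a2 a3 ->
  4*(a0 - (a2-l)^2/4) + 4*(l - a3^2/4)*((a2-l)/2) - 2*(a1 - a3*(a2-l)/2)*(a3/2) = 0.
Proof.
  intros H ->. unfold lambda0.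
  pose proof (sqrt_sqrt _ H) as Hr2.
  set (r := sqrt (lam_rad a0 a1 a2 a3)) in *. clearbody r.
  unfold lam_rad, b1, b2 in Hr2. unfold b2.
  assert (E : 4 * (a0 - (a2 - (4 * (a2 / 2) + 2 * r) / 3) ^ 2 / 4) +
   4 * ((4 * (a2 / 2) + 2 * r) / 3 - a3 ^ 2 / 4) * ((a2 - (4 * (a2 / 2) + 2 * r) / 3) / 2) -
   2 * (a1 - a3 * (a2 - (4 * (a2 / 2) + 2 * r) / 3) / 2) * (a3 / 2)
   = 4/3*(3 * (/ 4 * (4 * a0 - a2 ^ 2 - a1 * a3)) + 4 * (a2 / 2) ^ 2 - r*r)) by field.
  rewrite E, Hr2. ring.
Qed.

Lemma pow2_gt_0 x : x <> 0 -> 0 < x^2.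
Proof. intro h. replace (x^2) with (Rsqr x) by (unfold Rsqr; ring). apply Rsqr_pos_lt; auto. Qed.

Lemma pos_of_mul k q : 0 < k -> 0 <= k*q -> 0 <= q.
Proof. intros Hk H. destruct (Rle_or_lt 0 q) as [h|h]; auto.
  assert (k*q < 0) by (apply Rmult_pos_neg; auto). lra. Qed.

Lemma spos_of_mul k q : 0 < k -> 0 < k*q -> 0 < q.
Proof. intros Hk H. destruct (Rlt_or_le 0 q) as [h|h]; auto.
  assert (k*q <= 0) by (rewrite <- (Rmult_0_r k); apply Rmult_le_compat_l; lra). lra. Qed.

Lemma suff a0 a1 a2 a3 : 0 <= lam_rad a0 a1 a2 a3 ->
  a3^2/4 <= lambda0 a0 a1 a2 a3 -> 0 <= cubic_val a0 a1 a2 a3 (lambda0 a0 a1 a2 a3) ->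
  psd_form (quartic a0 a1 a2 a3).
Proof.
  intros H1 H2 H3 x y _.
  pose proof (crit a0 a1 a2 a3 _ H1 eq_refl) as Hc.
  pose proof (cub_id a0 a1 a2 a3 (lambda0 a0 a1 a2 a3)) as Hg.
  rewrite (decomp a0 a1 a2 a3 (lambda0 a0 a1 a2 a3)).
  set (l := lambda0 a0 a1 a2 a3) in *.
  set (A := l - a3^2/4) in *. set (B := a1 - a3*(a2-l)/2) in *.
  set (C := a0 - (a2-l)^2/4) in *.
  set (S := x ^ 2 + a3 / 2 * x * y + (a2 - l) / 2 * y ^ 2).
  assert (0 <= A*x^2 + B*x*y + C*y^2).
  { destruct (Req_dec A 0) as [HA|HA].
    - rewrite HA in Hg, Hc. assert (B = 0) by nra. assert (C = 0) by nra.
      rewrite HA, H, H0. lra.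
    - assert (0 < A) by (unfold A in *; lra).
      assert (4*A*(A*x^2 + B*x*y + C*y^2) = (2*A*x + B*y)^2 + (4*A*C - B^2)*y^2) by ring.
      assert (0 <= (4*A*C - B^2)*y^2) by (apply Rmult_le_pos; [lra | apply pow2_ge_0]).
      apply (pos_of_mul (4*A)); [lra|]. rewrite H0. pose proof (pow2_ge_0 (2*A*x + B*y)). lra. }
  assert (0 <= S^2) by apply pow2_ge_0.
  assert (0 <= y^2) by apply pow2_ge_0. nra.
Qed.

Lemma suff_pd a0 a1 a2 a3 : 0 <= lam_rad a0 a1 a2 a3 ->
  a3^2/4 < lambda0 a0 a1 a2 a3 -> 0 < cubic_val a0 a1 a2 a3 (lambda0 a0 a1 a2 a3) ->
  pd_form (quartic a0 a1 a2 a3).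
Proof.
  intros H1 H2 H3 x y Hxy.
  destruct (Req_dec y 0) as [Hy|Hy].
  { subst y. assert (x <> 0) by tauto. unfold quartic.
    assert (0 < x^2) by (apply pow2_gt_0; auto).
    match goal with |- 0 < ?e => replace e with (x^2*x^2) by ring end.
    apply Rmult_lt_0_compat; auto. }
  pose proof (cub_id a0 a1 a2 a3 (lambda0 a0 a1 a2 a3)) as Hg.
  rewrite (decomp a0 a1 a2 a3 (lambda0 a0 a1 a2 a3)).
  set (l := lambda0 a0 a1 a2 a3) in *.
  set (A := l - a3^2/4) in *. set (B := a1 - a3*(a2-l)/2) in *.
  set (C := a0 - (a2-l)^2/4) in *.
  set (S := x ^ 2 + a3 / 2 * x * y + (a2 - l) / 2 * y ^ 2).
  assert (0 < A) by (unfold A in *; lra).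
  assert (0 < A*x^2 + B*x*y + C*y^2).
  { assert (4*A*(A*x^2 + B*x*y + C*y^2) = (2*A*x + B*y)^2 + (4*A*C - B^2)*y^2) by ring.
    assert (0 < (4*A*C - B^2)*y^2) by (apply Rmult_lt_0_compat; [lra| apply pow2_gt_0; auto]).
    assert (0 <= (2*A*x + B*y)^2) by apply pow2_ge_0.
    apply (spos_of_mul (4*A)); [lra|]. rewrite H0. lra. }
  assert (0 <= S^2) by apply pow2_ge_0.
  assert (0 < y^2) by (apply pow2_gt_0; auto). nra.
Qed.

Lemma deriv0 a0 a1 a2 a3 x0 :
  (forall x, quartic a0 a1 a2 a3 x0 1 <= quartic a0 a1 a2 a3 x 1) ->
  4*x0^3 + 3*a3*x0^2 + 2*a2*x0 + a1 = 0.
Proof.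
  intro Hmin.
  assert (H : is_derive (fun x => quartic a0 a1 a2 a3 x 1) x0 (4*x0^3 + 3*a3*x0^2 + 2*a2*x0 + a1)).
  { unfold quartic. auto_derive; [auto | ring]. }
  apply is_derive_Reals in H.
  pose (pr := exist (fun l => derivable_pt_abs (fun x => quartic a0 a1 a2 a3 x 1) x0 l) _ H
     : derivable_pt (fun x => quartic a0 a1 a2 a3 x 1) x0).
  pose proof (deriv_minimum _ (x0-1) (x0+1) x0 pr ltac:(lra) ltac:(lra) (fun x _ _ => Hmin x)).
  exact H0.
Qed.

Lemma cont a0 a1 a2 a3 c : continuity_pt (fun x => quartic a0 a1 a2 a3 x 1) c.
Proof. unfold quartic. reg. Qed.

Lemma negabs a y : -(Rabs a * Rabs y) <= a*y.
Proof. rewrite <- Rabs_mult. pose proof (Rle_abs (-(a*y))). rewrite Rabs_Ropp in H. lra. Qed.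

Lemma coercive a0 a1 a2 a3 x : 1 + Rabs a3 + Rabs a2 + Rabs a1 <= Rabs x ->
  a0 <= quartic a0 a1 a2 a3 x 1.
Proof.
  intro Hx. unfold quartic.
  set (t := Rabs x) in *.
  assert (Ht3 : Rabs (x^3) = t^3) by (unfold t; symmetry; apply RPow_abs).
  assert (Ht4 : x^4 = t^4).
  { unfold t. rewrite RPow_abs. symmetry. apply Rabs_right.
    replace (x^4) with ((x^2)^2) by ring. apply Rle_ge, pow2_ge_0. }
  assert (Ht2 : x^2 = t^2).
  { unfold t. rewrite RPow_abs. symmetry. apply Rabs_right. apply Rle_ge, pow2_ge_0. }
  pose proof (negabs a3 (x^3)). pose proof (negabs a1 x). rewrite Ht3 in H.
  pose proof (Rabs_pos a3). pose proof (Rabs_pos a2). pose proof (Rabs_pos a1).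
  pose proof (Rle_abs a2). pose proof (Rle_abs (-a2)). rewrite Rabs_Ropp in H5.
  assert (a2 * x^2 >= - Rabs a2 * t^2) by (rewrite Ht2; pose proof (pow2_ge_0 t); nra).
  assert (ht1 : 1 <= t) by lra.
  assert (t^4 >= Rabs a3 * t^3 + Rabs a2 * t^2 + Rabs a1 * t).
  { assert (t^4 >= (1 + Rabs a3 + Rabs a2 + Rabs a1) * t^3).
    { replace (t^4) with (t*t^3) by ring. apply Rle_ge, Rmult_le_compat_r; [|lra].
      apply pow_le; lra. }
    assert (t^3 >= t^2) by (replace (t^3) with (t*t^2) by ring; nra).
    assert (t^2 >= t) by nra.
    nra. }
  replace (a3 * x^3 * 1) with (a3*x^3) by ring.
  replace (a1 * x * 1^3) with (a1*x) by ring.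
  rewrite Ht4. unfold t in *. nra.
Qed.

Lemma exists_min a0 a1 a2 a3 : exists x0, forall x,
  quartic a0 a1 a2 a3 x0 1 <= quartic a0 a1 a2 a3 x 1.
Proof.
  set (M := 1 + Rabs a3 + Rabs a2 + Rabs a1).
  assert (HM : 1 <= M) by (unfold M; pose proof (Rabs_pos a3); pose proof (Rabs_pos a2); pose proof (Rabs_pos a1); lra).
  destruct (continuity_ab_min (fun x => quartic a0 a1 a2 a3 x 1) (-M) M ltac:(lra)
    (fun c _ => cont a0 a1 a2 a3 c)) as [mx [Hmx Hb]].
  exists mx. intro x.
  destruct (Rle_or_lt (Rabs x) M) as [h|h].
  - apply Hmx. pose proof (Rle_abs x); pose proof (Rle_abs (-x)); rewrite Rabs_Ropp in *; lra. 
  - assert (quartic a0 a1 a2 a3 0 1 = a0) by (unfold quartic; ring).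
    pose proof (Hmx 0 ltac:(lra)).
    pose proof (coercive a0 a1 a2 a3 x ltac:(unfold M in h; lra)). simpl in *. lra.
Qed.
Lemma W_nonneg x0 p W m :
  (forall x, m <= quartic (x0^2*p^2 + x0^2*W + m) (2*x0^2*p - 2*x0*p^2 - 2*x0*W)
                  (x0^2 - 4*x0*p + p^2 + W) (2*p - 2*x0) x 1) -> 0 <= W.
Proof.
  intro H.
  assert (Id : forall x, quartic (x0^2*p^2 + x0^2*W + m) (2*x0^2*p - 2*x0*p^2 - 2*x0*W)
                  (x0^2 - 4*x0*p + p^2 + W) (2*p - 2*x0) x 1 = m + (x-x0)^2*((x+p)^2+W)).
  { intro x; unfold quartic; ring. }
  destruct (Rle_or_lt 0 W) as [h|h]; auto. exfalso.
  set (s := -W/(2*(1-W))).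
  assert (hs0 : 0 < s) by (unfold s; apply Rdiv_lt_0_compat; lra).
  assert (hs1 : s < 1/2).
  { unfold s. apply (Rmult_lt_reg_r (2*(1-W))); [lra|]. field_simplify; lra. }
  assert (hs2 : s*s + W < 0).
  { assert (s*s < s*(1/2)) by (apply Rmult_lt_compat_l; lra).
    assert (s*(2*(1-W)) = -W) by (unfold s; field; lra). nra. }
  assert (key : forall x, x <> x0 -> (x+p)^2 + W < 0 -> False).
  { intros x hx hw. pose proof (H x). rewrite Id in H0.
    assert (0 < (x-x0)^2).
    { replace ((x-x0)^2) with (Rsqr (x-x0)) by (unfold Rsqr; ring). apply Rsqr_pos_lt. lra. }
    assert ((x-x0)^2*((x+p)^2+W) < 0) by (apply Rmult_pos_neg; auto). lra. }
  destruct (Req_dec (-p+s) x0) as [e|e].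
  - apply (key (-p-s)); [lra|]. replace ((-p-s+p)^2) with (s*s) by ring. lra.
  - apply (key (-p+s)); [lra|]. replace ((-p+s+p)^2) with (s*s) by ring. lra.
Qed.
Lemma param a0 a1 a2 a3 x0 :
  (forall x, quartic a0 a1 a2 a3 x0 1 <= quartic a0 a1 a2 a3 x 1) ->
  exists p W, 0 <= W /\ a3 = 2*p - 2*x0 /\ a2 = x0^2 - 4*x0*p + p^2 + W /\
    a1 = 2*x0^2*p - 2*x0*p^2 - 2*x0*W /\
    a0 = x0^2*p^2 + x0^2*W + quartic a0 a1 a2 a3 x0 1.
Proof.
  intro Hmin.
  pose proof (deriv0 a0 a1 a2 a3 x0 Hmin) as Hd.
  set (m := quartic a0 a1 a2 a3 x0 1) in *.
  assert (Hmd : m = quartic a0 a1 a2 a3 x0 1) by reflexivity.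
  clearbody m.
  set (p := (a3 + 2*x0)/2). set (W := a2 - x0^2 + 4*x0*p - p^2).
  assert (e3 : a3 = 2*p - 2*x0) by (unfold p; field).
  assert (e2 : a2 = x0^2 - 4*x0*p + p^2 + W) by (unfold W; ring).
  assert (ea1 : a1 = -(4*x0^3 + 3*a3*x0^2 + 2*a2*x0)) by lra.
  assert (e1 : a1 = 2*x0^2*p - 2*x0*p^2 - 2*x0*W) by (rewrite ea1; unfold W, p; field).
  assert (e0 : a0 = x0^2*p^2 + x0^2*W + m).
  { rewrite Hmd. unfold quartic. rewrite ea1. unfold W, p. field. }
  exists p, W. repeat split; auto.
  pose proof Hmin as Hmin'.
  clearbody p W. clear Hmin Hmd ea1 Hd. subst a0 a1 a2 a3.
  apply (W_nonneg x0 p W m). exact Hmin'.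
Qed.

Lemma nec a0 a1 a2 a3 : psd_form (quartic a0 a1 a2 a3) ->
  exists W m, 0 <= W /\ 0 <= m /\ (pd_form (quartic a0 a1 a2 a3) -> 0 < m) /\
  0 <= lam_rad a0 a1 a2 a3 /\ a3^2/4 + W <= lambda0 a0 a1 a2 a3 /\
  W*m <= cubic_val a0 a1 a2 a3 (lambda0 a0 a1 a2 a3) /\
  (0 < m -> a3^2/4 < lambda0 a0 a1 a2 a3 /\ 0 < cubic_val a0 a1 a2 a3 (lambda0 a0 a1 a2 a3)).
Proof.
  intro Hpsd.
  destruct (exists_min a0 a1 a2 a3) as [x0 Hmin].
  destruct (param a0 a1 a2 a3 x0 Hmin) as [p [W [HW [e3 [e2 [e1 e0]]]]]].
  set (m := quartic a0 a1 a2 a3 x0 1) in *.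
  assert (Hm : 0 <= m) by (apply Hpsd; lra).
  exists W, m. split; [auto|]. split; [auto|]. split.
  { intro Hpd. apply Hpd. lra. }
  exact (nec_alg x0 p W m a0 a1 a2 a3 HW Hm e3 e2 e1 e0).
Qed.

Theorem theorem2 (a0 a1 a2 a3 : R) :
  (psd_form (quartic a0 a1 a2 a3) <->
     (0 <= lam_rad a0 a1 a2 a3 /\
      a3^2 / 4 <= lambda0 a0 a1 a2 a3 /\
      0 <= cubic_val a0 a1 a2 a3 (lambda0 a0 a1 a2 a3))) /\
  (pd_form (quartic a0 a1 a2 a3) <->
     (0 <= lam_rad a0 a1 a2 a3 /\
      a3^2 / 4 < lambda0 a0 a1 a2 a3 /\
      0 < cubic_val a0 a1 a2 a3 (lambda0 a0 a1 a2 a3))).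
Proof.
  split; split.
  - intro H. destruct (nec a0 a1 a2 a3 H) as [W [m [HW [Hm [_ [h1 [h2 [h3 _]]]]]]]].
    split; [auto|]. split; [lra|]. pose proof (Rmult_le_pos _ _ HW Hm). lra.
  - intros [h1 [h2 h3]]. apply suff; auto.
  - intro H.
    assert (Hp : psd_form (quartic a0 a1 a2 a3)) by (intros x y hxy; left; apply H; auto).
    destruct (nec a0 a1 a2 a3 Hp) as [W [m [HW [Hm [Hpm [h1 [h2 [h3 h4]]]]]]]].
    destruct (h4 (Hpm H)). auto.
  - intros [h1 [h2 h3]]. apply suff_pd; auto.
Qed.
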